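(* Let $\mathbb{F}$ be a finite field and let $n_x,n_y,m$ be positive integers with $n_x+n_y\le m-2$. Assume that for all positive integers $n_x',n_y',m'$ with $n_x'+n_y'\le m'$ there exists a Zariski open set in $\mathcal{B}^{(h)}(n_x',n_y',m')$ all of whose elements are $\mathbf{y}$-semiregular. Then there is a set $\mathcal{S}\subseteq\mathcal{B}(n_x,n_y,m)$ containing a Zariski open set such that every $B\in\mathcal{S}$ satisfies: the system $B=\mathbf{0}$ has a solution if and only if $1\notin J_{\mathbf{y},\le\tilde d}(B)$, where $$\tilde d=\left\lceil\frac{n_y(n_x+1)}{m-n_x-1}\right\rceil+1.$$
   Context: Variables $\mathbf{x}=(x_1,\dots,x_{n_x})$, $\mathbf{y}=(y_1,\dots,y_{n_y})$. A bilinear polynomial is $f=\mathbf{x}\mathbf{A}\mathbf{y}^{\top}+\mathbf{b}\mathbf{x}^{\top}+\mathbf{c}\mathbf{y}^{\top}+d$ over $\mathbb{F}$; $\mathcal{B}(n_x,n_y,m)$ is the set of length-$m$ sequences of bilinear polynomials (identified with $\mathbb{F}^{m(n_x+1)(n_y+1)}$ via coefficients, with its Zariski topology) and $\mathcal{B}^{(h)}(n_x,n_y,m)$ the homogeneous ones $\mathbf{x}\mathbf{A}\mathbf{y}^\top$. For a homogeneous bilinear sequence $B=(f_1,\dots,f_m)$ in $n_x'$ $\mathbf{x}$-variables and $n_y'$ $\mathbf{y}$-variables and $j\ge2$, $\mathbf{M}_{\mathbf{y},j}(B)$ is the matrix of coefficient vectors of the polynomials $\mathfrak{m}f_i$ with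 $\mathfrak{m}$ a monomial in the $\mathbf{y}$-variables of degree exactly $j-2$; $B$ is $\mathbf{y}$-$d$-regular if $\mathrm{Rank}(\mathbf{M}_{\mathbf{y},j}(B))=m\binom{n_y'+j-3}{j-2}$ for $j=2,\dots,d$; $d_{\mathbf{y},reg}(B)$ is the minimal $d$ with $\mathrm{Rank}(\mathbf{M}_{\mathbf{y},d}(B))=n_x'\binom{n_y'+d-2}{d-1}$; $B$ is $\mathbf{y}$-semiregular if it is $\mathbf{y}$-$d$-regular for every $d<d_{\mathbf{y},reg}(B)$. For $B=(f_1,\dots,f_m)\in\mathcal{B}(n_x,n_y,m)$, $J_{\mathbf{y},\le d}(B)=\{\sum_i g_if_i: g_i\in\mathbb{F}[\mathbf{y}],\ \deg g_i\le d-2\}$. A solution of $B=\mathbf{0}$ is a point of $\mathbb{F}^{n_x}\times\mathbb{F}^{n_y}$ where all $f_i$ vanish. *)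

(* Defs.v *)
From HB Require Import structures.
From mathcomp Require Import all_boot all_order all_algebra.
From mathcomp Require Import mpoly.
Set Implicit Arguments. Unset Strict Implicit. Unset Printing Implicit Defensive.
Import Order.TTheory GRing.Theory.
Local Open Scope ring_scope.

Section Defs.
Variable K : fieldType.

(* Zariski topology on K^I (I a finite index type, coordinates = functions
   I -> K): U is open iff it is the complement of the common zero set of
   some family P of polynomials in the coordinates. *)
Definition coord_eval (I : finType) (v : I -> K) : 'I_#|I| -> K :=
  fun k => v (enum_val k).

Definition zariski_open (I : finType) (U : (I -> K) -> Prop) : Prop :=
  exists P : {mpoly K[#|I|]} -> Prop,
    forall v, U v <-> exists2 p, P p & p.@[coord_eval v] != 0.

(* B (k,i,j) is the
   coefficient of x_i*y_j in f_k, with the convention x_0 = y_0 = 1,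
   i.e. B(k,0,0) = d_k, B(k,i+1,0) = (b_k)_i, B(k,0,j+1) = (c_k)_j,
   B(k,i+1,j+1) = (A_k)_{ij}. *)
Definition bilseq (nx ny m : nat) := ('I_m * 'I_nx.+1 * 'I_ny.+1)%type -> K.

Definition xv (nx ny : nat) (i : 'I_nx.+1) : {mpoly K[nx + ny]} :=
  if unlift ord0 i is Some i' then 'X_(lshift ny i') else 1.
Definition yv (nx ny : nat) (j : 'I_ny.+1) : {mpoly K[nx + ny]} :=
  if unlift ord0 j is Some j' then 'X_(rshift nx j') else 1.

Definition bil_poly (nx ny m : nat) (B : bilseq nx ny m) (k : 'I_m)
  : {mpoly K[nx + ny]} :=
  \sum_(i < nx.+1) \sum_(j < ny.+1) B (k, i, j) *: (@xv nx ny i * @yv nx ny j).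

Definition xy_point (nx ny : nat) (x : 'I_nx -> K) (y : 'I_ny -> K)
  : 'I_(nx + ny) -> K :=
  fun t => match split t with inl i => x i | inr j => y j end.

Definition has_solution (nx ny m : nat) (B : bilseq nx ny m) : Prop :=
  exists (x : 'I_nx -> K) (y : 'I_ny -> K),
    forall k, (bil_poly B k).@[xy_point x y] = 0.

Definition y_only (nx ny : nat) (g : {mpoly K[nx + ny]}) : bool :=
  all (fun mm : 'X_{1..nx + ny} => [forall i : 'I_nx, mm (lshift ny i) == 0%N])
      (msupp g).

(* p \in J_{y,<=d}(B) = { sum_i g_i f_i : g_i in K[y], deg g_i <= d-2 }.
   (msize = total degree + 1, and msize 0 = 0.) *)
Definition in_Jy (nx ny m : nat) (d : nat) (B : bilseq nx ny m)
  (p : {mpoly K[nx + ny]}) : Prop :=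
  exists g : 'I_m -> {mpoly K[nx + ny]},
    (forall k, @y_only nx ny (g k) /\ (msize (g k) <= d - 1)%N) /\
    p = \sum_(k < m) g k * bil_poly B k.

Definition hbilseq (nx ny m : nat) := ('I_m * 'I_nx * 'I_ny)%type -> K.

Definition hbil_poly (nx ny m : nat) (B : hbilseq nx ny m) (k : 'I_m)
  : {mpoly K[nx + ny]} :=
  \sum_(a < nx) \sum_(b < ny) B (k, a, b) *: ('X_(lshift ny a) * 'X_(rshift nx b)).

Definition ymono (ny e : nat) := {mm : 'X_{1..ny < e.+1} | mdeg mm == e}.

Definition ylift (nx ny : nat) (mm : 'X_{1..ny}) : 'X_{1..nx + ny} :=
  [multinom (match split i with inl _ => 0%N | inr j => mm j end) | i < nx + ny].

(* M_{y,j}(B): rows = coefficient vectors of mono * f_k, mono a y-monomial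
   of degree j-2; columns indexed by the monomials x_a * y^mu, deg mu = j-1
   (the only monomials that can occur in such products). *)
Definition Mrow (nx ny m j : nat) := ('I_m * ymono ny (j - 2))%type.
Definition Mcol (nx ny m j : nat) := ('I_nx * ymono ny (j - 1))%type.

Definition Mmat (nx ny m : nat) (B : hbilseq nx ny m) (j : nat)
  : 'M[K]_(#|{: Mrow nx ny m j}|, #|{: Mcol nx ny m j}|) :=
  \matrix_(r < #|{: Mrow nx ny m j}|, c < #|{: Mcol nx ny m j}|)
    let rc : Mrow nx ny m j := enum_val r in
    let cc : Mcol nx ny m j := enum_val c in
    ('X_[ylift nx (val rc.2 : 'X_{1..ny})] * hbil_poly B rc.1)
      @_(mnm_add U_(lshift ny cc.1) (ylift nx (val cc.2 : 'X_{1..ny}))).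

Definition rank_My (nx ny m : nat) (B : hbilseq nx ny m) (j : nat) : nat :=
  \rank (Mmat B j).

Definition My_full (nx ny m : nat) (B : hbilseq nx ny m) (d : nat) : Prop :=
  rank_My B d = (nx * 'C(ny + d - 2, d - 1))%N.

Definition y_d_regular (nx ny m : nat) (B : hbilseq nx ny m) (d : nat) : Prop :=
  forall j, (2 <= j <= d)%N -> rank_My B j = (m * 'C(ny + j - 3, j - 2))%N.

(* y-semiregular: y-d-regular for every d < d_{y,reg}(B), where d_{y,reg}(B)
   is the least d >= 2 with My_full B d (if no such d exists, every d
   satisfies d < d_{y,reg}). *)
Definition y_semiregular (nx ny m : nat) (B : hbilseq nx ny m) : Prop :=
  forall d, (2 <= d)%N -> (forall d', (2 <= d' <= d)%N -> ~ My_full B d') ->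
    y_d_regular B d.

End Defs.

Definition ceil_div (a b : nat) : nat := (a + b.-1) %/ b.

Definition dtilde (nx ny m : nat) : nat :=
  (ceil_div (ny * (nx + 1)) (m - nx - 1) + 1)%N.

(* Main.v *)
Require Import Defs.
From HB Require Import structures.
From mathcomp Require Import all_boot all_order all_algebra.
From mathcomp Require Import mpoly.
From mathcomp Require Import zify.
Import GRing.Theory.
Local Open Scope ring_scope.

Lemma Jy_no_sol (K : fieldType) nx ny m (B : bilseq K nx ny m) d :
  in_Jy d B 1 -> ~ has_solution B.
Proof.
case=> g [_ Hg] [x [y Hs]].
have := congr1 (meval (xy_point x y)) Hg.
rewrite meval1 raddf_sum /= big1 => [/eqP|k _]; first by rewrite oner_eq0.
by rewrite mevalM Hs mulr0.
Qed.

Lemma Jy_mono (K : fieldType) nx ny m (B : bilseq K nx ny m) d d' p :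
  (d' <= d)%N -> in_Jy d' B p -> in_Jy d B p.
Proof.
move=> le [g [Hg1 Hg2]]; exists g; split=> // k.
have [h1 h2] := Hg1 k; split=> //; apply: leq_trans h2 _; lia.
Qed.


Lemma ceil_divP a b : (0 < b)%N -> (a <= ceil_div a b * b)%N.
Proof.
move=> b0; rewrite /ceil_div.
have := divn_eq (a + b.-1) b; have := ltn_pmod (a + b.-1) b0.
set q := (_ %/ _)%N; set r := (_ %% _)%N. lia.
Qed.

Lemma numeric nx ny m : (0 < ny)%N -> (nx + ny + 2 <= m)%N ->
  let dt := dtilde nx ny m in
  (2 <= dt)%N /\
  (nx.+1 * 'C(ny.+1 + dt - 2, dt - 1) <= m * 'C(ny.+1 + dt - 3, dt - 2))%N.
Proof.
move=> ny0 hm dt.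
have hb : (0 < m - nx - 1)%N by lia.
have hc := @ceil_divP (ny * (nx + 1)) _ hb.
have c0 : (0 < ceil_div (ny * (nx + 1)) (m - nx - 1))%N.
  case E: ceil_div hc => [|c] //; rewrite mul0n; nia.
rewrite /dt /dtilde; move: hc c0.
case: (ceil_div _ _) => [|c] // hc _; split; first lia.
have -> : (ny.+1 + (c.+1 + 1) - 2 = ny + c.+1)%N by lia.
have -> : (c.+1 + 1 - 1 = c.+1)%N by lia.
have -> : (ny.+1 + (c.+1 + 1) - 3 = ny + c)%N by lia.
have -> : (c.+1 + 1 - 2 = c)%N by lia.
rewrite -(leq_pmul2l (ltn0Sn c)) mulnCA -mul_bin_diag.
have -> : (ny + c.+1).-1 = (ny + c)%N by lia.
rewrite mulnA mulnCA mulnA; apply: leq_mul => //; lia.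
Qed.
Lemma card_ymono n e : (#|{: ymono n.+1 e}| <= 'C(e + n, e))%N.
Proof.
pose f (y : ymono n.+1 e) : 'X_{1..n.+1} := bmnm (val y).
have finj : injective f by move=> y1 y2 /val_inj /val_inj.
rewrite -(size_basis n e) cardE -(size_map f).
apply: uniq_leq_size; first by rewrite map_inj_uniq ?enum_uniq.
move=> x /mapP [y _ ->]; rewrite -basis_cover.
by case: y => [[mm Hb] /= He].
Qed.

Lemma semireg_full (K : fieldType) nx ny m (B : hbilseq K nx.+1 ny.+1 m) :
  (0 < ny)%N -> (nx + ny + 2 <= m)%N -> y_semiregular B ->
  exists2 d, (2 <= d <= dtilde nx ny m)%N & row_full (Mmat B d).
Proof.
move=> ny0 hm sreg.
have [dt2 hnum] := @numeric nx ny m ny0 hm.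
set dt := dtilde nx ny m in dt2 hnum *.
have cardcol j : (2 <= j)%N ->
    (#|{: Mcol nx.+1 ny.+1 m j}| <= nx.+1 * 'C(ny.+1 + j - 2, j - 1))%N.
  move=> j2; rewrite /Mcol card_prod card_ord leq_mul2l; apply/orP; right.
  have -> : (ny.+1 + j - 2 = (j - 1) + ny)%N by lia.
  exact: card_ymono.
have fullP j : (2 <= j)%N -> My_full B j -> row_full (Mmat B j).
  move=> j2 hf; rewrite /row_full eqn_leq rank_leq_col /=.
  by move: hf; rewrite /My_full /rank_My => ->; apply: cardcol.
case: (boolP [exists d : 'I_dt.+1, (2 <= d)%N &&
                 (rank_My B d == nx.+1 * 'C(ny.+1 + d - 2, d - 1))%N]).
  case/existsP=> d /andP [d2 /eqP hd]; exists d; last exact: fullP.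
  by rewrite d2 -ltnS ltn_ord.
move=> /existsPn hno; exfalso.
have hnf : forall d', (2 <= d' <= dt)%N -> ~ My_full B d'.
  move=> d' /andP [h1 h2] hf.
  have := hno (Ordinal (n:=dt.+1) (m:=d') (leq_trans h2 (leqnn _))).
  by rewrite /= h1 /My_full hf eqxx.
have := sreg dt dt2 hnf dt (ltac:(by rewrite dt2 leqnn)).
move=> hreg; apply: (hnf dt); first by rewrite dt2 leqnn.
rewrite /My_full; apply/eqP; rewrite eqn_leq; apply/andP; split.
  exact: leq_trans (rank_leq_col _) (cardcol _ dt2).
by rewrite hreg.
Qed.

Lemma splitl n1 n2 (a : 'I_n1) : split (lshift n2 a) = inl a.
Proof. exact: (unsplitK (inl a)). Qed.
Lemma splitr n1 n2 (b : 'I_n2) : split (rshift n1 b) = inr b.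
Proof. exact: (unsplitK (inr b)). Qed.

Lemma mnm_split n1 n2 (m1 m2 : 'X_{1..n1 + n2}) :
  (forall a, m1 (lshift n2 a) = m2 (lshift n2 a)) ->
  (forall b, m1 (rshift n1 b) = m2 (rshift n1 b)) -> m1 = m2.
Proof.
by move=> hl hr; apply/mnmP=> i; rewrite -(splitK i); case: (split i).
Qed.

Section Core.
Variables (K : fieldType) (nx ny m : nat) (B : bilseq K nx ny m) (d : nat).
Hypothesis d2 : (2 <= d)%N.

Definition hv (i : 'I_(nx.+1 + ny.+1)) : {mpoly K[nx + ny]} :=
  match split i with inl a => @xv K nx ny a | inr b => @yv K nx ny b end.
Definition lq := [tuple hv i | i < nx.+1 + ny.+1].
Definition Dh (p : {mpoly K[nx.+1 + ny.+1]}) := p \mPo lq.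

Lemma Dh_X (mm : 'X_{1..nx.+1 + ny.+1}) :
  Dh 'X_[mm] = \prod_(a < nx.+1) (@xv K nx ny a) ^+ mm (lshift ny.+1 a) *
               \prod_(b < ny.+1) (@yv K nx ny b) ^+ mm (rshift nx.+1 b).
Proof.
rewrite /Dh comp_mpolyX big_split_ord /=; congr (_ * _); apply: eq_bigr => i _;
by rewrite tnth_mktuple /hv ?splitl ?splitr.
Qed.

Lemma Dh_hbil k : Dh (hbil_poly (B : hbilseq K nx.+1 ny.+1 m) k) = bil_poly B k.
Proof.
rewrite /Dh /hbil_poly /bil_poly raddf_sum; apply: eq_bigr => a _.
rewrite raddf_sum; apply: eq_bigr => b _.
rewrite /= (comp_mpolyZ (B (k, a, b))) comp_mpoly_is_multiplicative.
by rewrite !comp_mpolyXU -!tnth_nth !tnth_mktuple /hv splitl splitr.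
Qed.


Definition ym (mono : 'X_{1..ny.+1}) : 'X_{1..nx + ny} :=
  [multinom match split i with inl _ => 0%N | inr j => mono (lift ord0 j) end
   | i < nx + ny].

Lemma ym_l mono a : ym mono (lshift ny a) = 0%N.
Proof. by rewrite mnmE splitl. Qed.

Lemma mdeg_ym mono : (mdeg (ym mono) <= mdeg mono)%N.
Proof.
rewrite !mdegE big_split_ord /= big1 ?add0n => [|a _]; last by rewrite ym_l.
rewrite big_ord_recl /= (eq_bigr (fun j => mono (lift ord0 j))) ?leq_addl //.
by move=> j _; rewrite mnmE splitr.
Qed.

Lemma Dh_ylift mono : Dh 'X_[ylift nx.+1 mono] = 'X_[ym mono].
Proof.
rewrite Dh_X big1 ?mul1r => [|a _]; last by rewrite mnmE splitl expr0.
rewrite mpolyXE_id big_split_ord /= [X in _ = X * _]big1 ?mul1r => [|a _]; last by rewrite ym_l expr0.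
rewrite big_ord_recl /yv unlift_none expr1n mul1r; apply: eq_bigr => j _.
by rewrite liftK !mnmE !splitr.
Qed.


Definition colmon (cc : Mcol nx.+1 ny.+1 m d) : 'X_{1..nx.+1 + ny.+1} :=
  mnm_add U_(lshift ny.+1 cc.1) (ylift nx.+1 (val cc.2 : 'X_{1..ny.+1})).

Lemma colmon_inj : injective colmon.
Proof.
move=> [a [mu hmu]] [a' [mu' hmu']] /= E.
have ha := congr1 (fun w : 'X_{1..nx.+1 + ny.+1} => w (lshift ny.+1 a)) E.
move: ha; rewrite /= !mnmDE !mnm1E !mnmE !splitl !addn0 !eq_shift eqxx.
case: eqP => // Ha _; rewrite /= in Ha; subst a'; congr (_, _).
apply: val_inj; apply: val_inj => /=.
apply/mnmP => b.
have hb := congr1 (fun w : 'X_{1..nx.+1 + ny.+1} => w (rshift nx.+1 b)) E.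
by move: hb; rewrite /= !mnmDE !mnm1E !mnmE !splitr !eq_shift !add0n.
Qed.

Lemma mu0_proof : (mdeg (U_(@ord0 ny) *+ (d - 1))%MM < (d - 1).+1)%N.
Proof. by rewrite mdegMn mdeg1 mul1n. Qed.
Definition mu0b : 'X_{1..ny.+1 < (d - 1).+1} := BMultinom mu0_proof.
Lemma mu0_proof2 : mdeg mu0b == (d - 1)%N.
Proof. by rewrite /= mdegMn mdeg1 mul1n. Qed.
Definition mu0 : ymono ny.+1 (d - 1) := exist _ mu0b mu0_proof2.

Lemma Dh_col0 : Dh 'X_[colmon (ord0, mu0)] = 1.
Proof.
rewrite Dh_X !big1 ?mulr1 // => i _.
  rewrite /= mnmDE mnm1E mnmE splitr /= mulmnE mnm1E add0n.
  case: (i =P ord0) => [->|/eqP ne]; first by rewrite /yv unlift_none expr1n.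
  by rewrite eq_sym (negbTE ne) mul0n expr0.
rewrite /= mnmDE mnm1E mnmE splitl addn0 eq_shift.
case: (i =P ord0) => [->|/eqP ne]; first by rewrite /xv unlift_none expr1n.
by rewrite eq_sym (negbTE ne) expr0.
Qed.


Definition Prow (rc : Mrow nx.+1 ny.+1 m d) : {mpoly K[nx.+1 + ny.+1]} :=
  'X_[ylift nx.+1 (val rc.2 : 'X_{1..ny.+1})] *
  hbil_poly (B : hbilseq K nx.+1 ny.+1 m) rc.1.

Lemma shift_proof (mono : ymono ny.+1 (d - 2)) (b : 'I_ny.+1) :
  (mdeg ((val mono : 'X_{1..ny.+1}) + U_(b))%MM < (d - 1).+1)%N.
Proof. case: mono => [mono /= /eqP h]; rewrite mdegD mdeg1 h; lia. Qed.
Lemma shift_proof2 (mono : ymono ny.+1 (d - 2)) (b : 'I_ny.+1) :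
  mdeg (BMultinom (shift_proof mono b)) == (d - 1)%N.
Proof. case: mono => [mono /= /eqP h]; rewrite mdegD mdeg1 h; apply/eqP; lia. Qed.
Definition shiftm mono b : ymono ny.+1 (d - 1) :=
  exist (fun mm : 'X_{1..ny.+1 < (d - 1).+1} => mdeg mm == (d - 1)%N) _ (shift_proof2 mono b).

Lemma Prow_expand rc :
  Prow rc = \sum_(cc : Mcol nx.+1 ny.+1 m d) (Prow rc)@_(colmon cc) *: 'X_[colmon cc].
Proof.
apply/mpolyP => w; rewrite raddf_sum /=.
under eq_bigr do rewrite mcoeffZ mcoeffX.
case: (pickP (fun cc => colmon cc == w)) => [cc0 /eqP <-|none].
  rewrite (bigD1 cc0) //= eqxx mulr1 big1 ?addr0 // => cc ne.
  by rewrite (inj_eq colmon_inj) (negbTE ne) mulr0.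
rewrite big1 => [|cc _]; last by rewrite none mulr0.
rewrite /Prow /hbil_poly mulr_sumr raddf_sum big1 //= => a _.
rewrite mulr_sumr raddf_sum big1 //= => b _.
rewrite -scalerAr -!mpolyXD mcoeffZ mcoeffX.
suff -> : (ylift nx.+1 (val rc.2 : 'X_{1..ny.+1}) + (U_(lshift ny.+1 a) + U_(rshift nx.+1 b)))%MM
          = colmon (a, shiftm rc.2 b) by rewrite none mulr0.
apply: mnm_split => [a'|b'].
  by rewrite /colmon !mnmDE !mnmE !splitl /= !eq_shift add0n !addn0.
by rewrite /colmon !mnmDE !mnmE !splitr /= !eq_shift mnmDE mnm1E addnCA.
Qed.


Lemma Mmat_entry r (cc : Mcol nx.+1 ny.+1 m d) :
  Mmat (B : hbilseq K nx.+1 ny.+1 m) d r (enum_rank cc) = (Prow (enum_val r))@_(colmon cc).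
Proof. by rewrite mxE enum_rankK. Qed.

Lemma core : row_full (Mmat (B : hbilseq K nx.+1 ny.+1 m) d) -> in_Jy d B 1.
Proof.
case/row_fullP => X hX.
pose cc0 : Mcol nx.+1 ny.+1 m d := (ord0, mu0).
pose i0 := enum_rank cc0.
have hcoef cc : \sum_r X i0 r * (Prow (enum_val r))@_(colmon cc) = (cc0 == cc)%:R.
  move/matrixP: (hX) => /(_ i0 (enum_rank cc)); rewrite !mxE.
  rewrite (inj_eq enum_rank_inj) => <-; apply: eq_bigr => r _.
  by rewrite Mmat_entry.
have hpoly : \sum_r X i0 r *: Prow (enum_val r) = 'X_[colmon cc0].
  under eq_bigr do rewrite Prow_expand scaler_sumr.
  rewrite exchange_big /=.
  under eq_bigr do under eq_bigr do rewrite scalerA.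
  under eq_bigr do rewrite -scaler_suml hcoef.
  rewrite (bigD1 cc0) //= eqxx scale1r big1 ?addr0 // => cc ne.
  by rewrite eq_sym (negbTE ne) scale0r.
have hD := congr1 Dh hpoly.
rewrite Dh_col0 /Dh raddf_sum /= in hD.
exists (fun k => \sum_(r | (enum_val r).1 == k)
          X i0 r *: 'X_[ym (val (enum_val r).2 : 'X_{1..ny.+1})]).
split.
  move=> k.
  have hsupp w : w \in msupp (\sum_(r | (enum_val r).1 == k)
          X i0 r *: 'X_[ym (val (enum_val r).2 : 'X_{1..ny.+1})]) ->
      exists r : 'I_#|{: Mrow nx.+1 ny.+1 m d}|, w = ym (val (enum_val r).2 : 'X_{1..ny.+1}).
    move/msupp_sum_le/flatten_mapP => [r _] /msuppZ_le.
    by rewrite msuppX mem_seq1 => /eqP ->; exists r.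
  split.
    apply/allP => w /hsupp [r ->]; apply/forallP => i; by rewrite ym_l.
  rewrite msizeE; apply/bigmax_leqP_seq => w /hsupp [r ->] _.
  have := mdeg_ym (val (enum_val r).2 : 'X_{1..ny.+1}).
  case: (enum_val r).2 => [mono /= /eqP ->]; lia.
rewrite -hD (partition_big (fun r => (enum_val r).1) xpredT) //=.
apply: eq_bigr => k _; rewrite mulr_suml; apply: eq_bigr => r /eqP <-.
rewrite linearZ /= rmorphM /=.
by rewrite -[_ \mPo lq]/(Dh _) -[hbil_poly _ _ \mPo lq]/(Dh _) Dh_ylift Dh_hbil scalerAl.
Qed.

End Core.

Theorem corollary1
  (F : finFieldType) (K : closedFieldType) (iota : {rmorphism F -> K})
  (K_alg : forall z : K, exists2 p : {poly F}, p != 0 & root (map_poly iota p) z)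
  (nx ny m : nat) (Hnx : (0 < nx)%N) (Hny : (0 < ny)%N) (Hm : (0 < m)%N)
  (Hdim : (nx + ny + 2 <= m)%N)
  (Hsemireg : forall nx' ny' m' : nat,
      (0 < nx')%N -> (0 < ny')%N -> (0 < m')%N -> (nx' + ny' <= m')%N ->
      exists U : hbilseq K nx' ny' m' -> Prop,
        zariski_open U /\ (exists B, U B) /\
        (forall B, U B -> y_semiregular B)) :
  exists S : bilseq K nx ny m -> Prop,
    (exists U : bilseq K nx ny m -> Prop,
        zariski_open U /\ (exists B, U B) /\ (forall B, U B -> S B)) /\
    (forall B, S B ->
       (has_solution B <-> ~ in_Jy (dtilde nx ny m) B 1)).
Proof.
have hle : (nx.+1 + ny.+1 <= m)%N by lia.
have [U [hU [[B0 hB0] hsr]]] := Hsemireg nx.+1 ny.+1 m isT isT Hm hle.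
exists U; split.
  by exists U; split => //; split => //; exists B0.
move=> B hB.
have [d /andP [d2 dle] hfull] := @semireg_full K nx ny m B Hny Hdim (hsr B hB).
have hJ : in_Jy (dtilde nx ny m) B 1 := @Jy_mono K nx ny m B _ _ 1 dle (@core K nx ny m B d d2 hfull).
split => [hs hJ'|hn]; first exact: (@Jy_no_sol K nx ny m B _ hJ' hs).
by exfalso; apply: hn.
Qed.
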